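(* Let $K_4$ be the complete graph on $4$ vertices. The $3$-uniform power hypergraph $K_4^{(3)}$ has the eigenvalue $5^{1/3}$ (the real cube root of $5$), whereas no induced subgraph of $K_4$ has an eigenvalue $\beta$ with $\beta^2=5$. (In particular, the statement ''$\lambda$ is an eigenvalue of $G^{(3)}$ iff some induced subgraph of $G$ has an eigenvalue $\beta$ with $\beta^2=\lambda^3$'' is false.)
   Context: Tensor eigenvalues: for a $k$-order $n$-dimensional tensor $T=(t_{i_1\cdots i_k})$, $\lambda\in\mathbb{C}$ is an eigenvalue if there is $\mathbf{x}\ne 0$ with $\sum_{i_2,\dots,i_k}t_{ii_2\cdots i_k}x_{i_2}\cdots x_{i_k}=\lambda x_i^{k-1}$ for all $i$. The adjacency tensor of a $k$-uniform hypergraph has entry $\frac1{(k-1)!}$ at $(i_1,\dots,i_k)$ if $\{i_1,\dots,i_k\}$ is an edge and $0$ otherwise; eigenvalues of the hypergraph are those of this tensor. The $k$-power hypergraph $G^{(k)}$ of a graph $G$ is the $k$-uniform hypergraph obtained by adding $k-2$ new vertices to each edge of $G$, with distinct edges receiving disjoint sets of new vertices. Eigenvalues of a graph are eigenvalues of its adjacency matrix. *)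

(* Defs.v *)
From HB Require Import structures.
From mathcomp Require Import all_boot all_order all_algebra all_field.
Set Implicit Arguments. Unset Strict Implicit. Unset Printing Implicit Defensive.
Import Order.TTheory GRing.Theory Num.Theory.
Local Open Scope ring_scope.

(* Simple graphs: a symmetric irreflexive relation on a finite vertex type. *)
Section Graphs.
Variables (V : finType) (G : rel V).

Definition gedges : {set {set V}} :=
  [set e | [exists x, exists y, G x y && (e == [set x; y])]].

(* vertex type of the k-power hypergraph G^(k): the old vertices plus,
   for every edge e of G, k-2 new vertices (e, j), j < k-2. *)
Definition pvert (k : nat) : finType :=
  (V + {p : {set V} * 'I_(k - 2) | p.1 \in gedges})%type.

Definition pedge (k : nat) (e : {set V}) : {set pvert k} :=
  [set v : pvert k | match v with
                     | inl x => x \in e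
                     | inr q => (sval q).1 == e end].

Definition power_edges (k : nat) : {set {set pvert k}} :=
  [set pedge k e | e in gedges].

Definition induced_adj (C : numClosedFieldType) (S : {set V}) : 'M[C]_#|S| :=
  \matrix_(i, j) (G (enum_val i) (enum_val j))%:R.

End Graphs.

Section Hypergraphs.
Variables (C : numClosedFieldType) (W : finType) (E : {set {set W}}) (k : nat).

(* entry t_{i i_2 ... i_k} of the adjacency tensor, with (i_2,...,i_k) = f *)
Definition adjT (i : W) (f : {ffun 'I_k.-1 -> W}) : C :=
  if (i |: [set f j | j in 'I_k.-1]) \in E then ((k.-1)`!%:R)^-1 else 0.

Definition hyp_eigenvalue (lam : C) : Prop :=
  exists x : W -> C, (exists v, x v != 0) /\
    forall i : W,
      \sum_(f : {ffun 'I_k.-1 -> W}) adjT i f * \prod_(j < k.-1) x (f j)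
      = lam * x i ^+ k.-1.

End Hypergraphs.

Definition K4 : rel 'I_4 := fun x y => x != y.

(* Main.v *)
Require Import Defs.
From HB Require Import structures.
From mathcomp Require Import all_boot all_order all_algebra all_field.
From mathcomp Require Import ring.
Import Order.TTheory GRing.Theory Num.Theory.
Local Open Scope ring_scope.


Section Gen.
Variables (C : numClosedFieldType) (T : finType).

Lemma dsum (F : T -> T -> C) a b :
  \sum_w1 \sum_w2 (if (w1 == a) && (w2 == b) then F w1 w2 else 0) = F a b.
Proof.
rewrite (eq_bigr (fun w1 => if w1 == a then F a b else 0)) => [|w1 _].
  by rewrite -big_mkcond big_pred1_eq.
case: eqP => [->|_] /=; last by rewrite big1.
by rewrite -big_mkcond big_pred1_eq.
Qed.

Lemma set3_eq (i a b w1 w2 : T) : a != b -> a != i -> b != i ->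
  ([set i; w1; w2] == [set i; a; b]) =
  ((w1 == a) && (w2 == b)) || ((w1 == b) && (w2 == a)).
Proof.
move=> ab ai bi; apply/idP/idP.
  move/eqP=> E1.
  have : a \in [set i; w1; w2] by rewrite E1 !inE eqxx !orbT.
  have : b \in [set i; w1; w2] by rewrite E1 !inE eqxx !orbT.
  rewrite !inE (negbTE ai) (negbTE bi) /=.
  case/orP=> /eqP Hb; case/orP=> /eqP Ha; subst.
  - by rewrite eqxx in ab.
  - by rewrite !eqxx orbT.
  - by rewrite !eqxx.
  - by rewrite eqxx in ab.
case/orP=> /andP[/eqP-> /eqP->] //.
by apply/eqP/setP=> w; rewrite !inE orbAC.
Qed.

Lemma inner3 (x : T -> C) (i : T) (e : {set T}) :
  #|e| = 3 -> i \in e ->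
  \sum_w1 \sum_w2 (if [set i; w1; w2] == e then x w1 * x w2 else 0)
  = 2 * \prod_(w in e :\ i) x w.
Proof.
move=> He Hi.
have : #|e :\ i| == 2 by move: He; rewrite (cardsD1 i) Hi add1n => -[->].
case/cards2P=> a [b [ab Eab]].
have : a \in e :\ i by rewrite Eab !inE eqxx.
have : b \in e :\ i by rewrite Eab !inE eqxx orbT.
rewrite !in_setD1 => /andP[bi _] /andP[ai _].
have Ee : e = [set i; a; b].
  by rewrite -(setD1K Hi) Eab; apply/setP=> w; rewrite !inE orbA.
rewrite Eab big_setU1 ?big_set1 /=; last by rewrite inE.
rewrite Ee.
rewrite (eq_bigr (fun w1 => \sum_w2 ((if (w1 == a) && (w2 == b) then x w1 * x w2 else 0)
   + (if (w1 == b) && (w2 == a) then x w1 * x w2 else 0)))); last first.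
  move=> w1 _; apply: eq_bigr => w2 _; rewrite set3_eq //.
  case E1: ((w1 == a) && (w2 == b)); case E2: ((w1 == b) && (w2 == a)) => /=;
    rewrite ?addr0 ?add0r //.
  move: E1 E2 => /andP[/eqP-> _] /andP[/eqP Hab _]; by rewrite Hab eqxx in ab.
rewrite (eq_bigr (fun w1 => \sum_w2 (if (w1 == a) && (w2 == b) then x w1 * x w2 else 0)
   + \sum_w2 (if (w1 == b) && (w2 == a) then x w1 * x w2 else 0))); last first.
  by move=> w1 _; rewrite big_split.
by rewrite big_split /= !dsum [x b * x a]mulrC -mulr2n mulr_natl.
Qed.

Lemma inner0 (x : T -> C) (i : T) (e : {set T}) :
  i \notin e ->
  \sum_w1 \sum_w2 (if [set i; w1; w2] == e then x w1 * x w2 else 0) = 0.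
Proof.
move=> Hi; apply: big1 => w1 _; apply: big1 => w2 _.
case: eqP => // E1; move: Hi; by rewrite -E1 !inE eqxx.
Qed.

End Gen.


Section Gen2.
Variables (C : numClosedFieldType) (T : finType).
Definition mk2 (w1 w2 : T) : {ffun 'I_2 -> T} :=
  [ffun j : 'I_2 => if j == ord0 then w1 else w2].

Lemma sum_ffun2 (F : {ffun 'I_2 -> T} -> C) :
  \sum_f F f = \sum_w1 \sum_w2 F (mk2 w1 w2).
Proof.
rewrite pair_big /=.
rewrite (reindex (fun p : T * T => mk2 p.1 p.2)) //=.
exists (fun f : {ffun 'I_2 -> T} => (f ord0, f ord_max)) => [[w1 w2] _|f _] /=.
  by rewrite !ffunE.
apply/ffunP => j; rewrite ffunE; case: ifP => [/eqP->//|].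
by case: j => [[|[|//]] Hj] //= _; congr (f _); apply: val_inj.
Qed.

Lemma mk2_img (w1 w2 : T) : [set mk2 w1 w2 j | j in 'I_2] = [set w1; w2].
Proof.
apply/setP=> w; apply/imsetP/set2P.
  by case=> j _ ->; rewrite ffunE; case: ifP => _; [left|right].
by case=> ->; [exists ord0 | exists ord_max]; rewrite // ffunE.
Qed.

Lemma prod_mk2 (x : T -> C) w1 w2 : \prod_(j < 2) x (mk2 w1 w2 j) = x w1 * x w2.
Proof. by rewrite !big_ord_recl big_ord0 mulr1 !ffunE. Qed.

Lemma card3 (a b c : T) : a != b -> a != c -> b != c -> #|[set a; b; c]| = 3.
Proof.
move=> ab ac bc; rewrite setUC !cardsU1 cards1 !inE.
by rewrite negb_or ![c == _]eq_sym ab ac bc.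
Qed.
End Gen2.


Definition W := pvert K4 3.
Definition Wq := {p : {set 'I_4} * 'I_(3 - 2) | p.1 \in gedges K4}.

Lemma pedge_inl u e : ((inl u : W) \in pedge K4 3 e) = (u \in e).
Proof. by rewrite inE. Qed.
Lemma pedge_inr (q : Wq) e : ((inr q : W) \in pedge K4 3 e) = ((sval q).1 == e).
Proof. by rewrite inE. Qed.
Lemma pedge_inj : injective (pedge K4 3).
Proof. by move=> e1 e2 E; apply/setP=> u; rewrite -!pedge_inl E. Qed.

Definition qof (e : {set 'I_4}) (He : e \in gedges K4) : Wq := exist _ (e, ord0) He.
Arguments qof {e}.
Lemma qofP (e : {set 'I_4}) (He : e \in gedges K4) (q : Wq) : (sval q).1 = e -> q = qof He.
Proof.
case: q => [[S j] Hq] /= ES; subst; apply: val_inj => /=; congr pair.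
by apply: val_inj => /=; move: (ltn_ord j); case: (nat_of_ord j).
Qed.

Lemma eq_inl (c u : 'I_4) : ((inl c : W) == inl u) = (c == u).
Proof. by apply/eqP/eqP => [[]|->]. Qed.
Lemma eq_inlr (c : 'I_4) (q : Wq) : ((inl c : W) == inr q) = false.
Proof. by apply/eqP. Qed.
Lemma eq_inrl (c : 'I_4) (q : Wq) : ((inr q : W) == inl c) = false.
Proof. by apply/eqP. Qed.
Lemma eq_inr (q q' : Wq) : ((inr q : W) == inr q') = (q == q').
Proof. by apply/eqP/eqP => [[]|->]. Qed.

Lemma pedgeE (e : {set 'I_4}) (He : e \in gedges K4) u v : e = [set u; v] ->
  pedge K4 3 e = [set inl u; inl v; inr (qof He)].
Proof.
move=> Ee; apply/setP => -[c|q]; rewrite !inE /=.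
  by rewrite !eq_inl eq_inlr orbF Ee !inE.
by rewrite ?eq_inrl eq_inr; apply/eqP/eqP => [/(@qofP e He q)|->].
Qed.

Lemma gedgesP e : reflect (exists u v, u != v /\ e = [set u; v]) (e \in gedges K4).
Proof.
rewrite inE; apply: (iffP existsP) => [[u /existsP [v /andP [uv /eqP ->]]]|[u [v [uv ->]]]].
  by exists u, v.
by exists u; apply/existsP; exists v; rewrite /K4 uv eqxx.
Qed.


Section P1.
Variable C : numClosedFieldType.
Definition lam : C := 3.-root (5%:R : C).
Definition mu : C := sqrtC lam.
Definition beta : C := mu ^+ 3.
Definition zz (u : 'I_4) : C := if (val u < 2)%N then 2 else beta + 1.
Definition i1 : 'I_4 := @Ordinal 4 1 isT.
Definition sgn (S : {set 'I_4}) : C := if (ord0 \in S) && (i1 \in S) then -1 else 1.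

Lemma lam3 : lam ^+ 3 = 5%:R. Proof. exact: rootCK. Qed.
Lemma beta2 : beta ^+ 2 = 5%:R.
Proof. by rewrite /beta -exprM mulnC exprM sqrtCK lam3. Qed.

Lemma signed_eig (u : 'I_4) :
  \sum_(v in [set v | v != u]) sgn [set u; v] * zz v = beta * zz u.
Proof.
rewrite big_mkcond /= !big_ord_recl big_ord0 /sgn /zz.
case: u => [[|[|[|[|//]]]] Hu]; rewrite !inE /=.
- by ring.
- by ring.
- by transitivity (beta ^+ 2 + beta); [rewrite beta2; ring | ring].
- by transitivity (beta ^+ 2 + beta); [rewrite beta2; ring | ring].
Qed.
End P1.

Section Gen3.
Variables (C : numClosedFieldType) (T : finType).
Lemma setD3l (a b c : T) : a != b -> a != c -> [set a; b; c] :\ a = [set b; c].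
Proof.
move=> ab ac; apply/setP=> w; rewrite !inE.
by case: (w =P a) => [->|] /=; rewrite ?(negbTE ab) ?(negbTE ac) ?orbF.
Qed.
Lemma setD3r (a b c : T) : a != c -> b != c -> [set a; b; c] :\ c = [set a; b].
Proof.
move=> ac bc; apply/setP=> w; rewrite !inE.
case: (w =P c) => [->|] /=; rewrite ?eqxx //= ?[c == _]eq_sym ?(negbTE ac) ?(negbTE bc) //.
by rewrite orbF.
Qed.
Lemma prod_set2 (x : T -> C) (a b : T) : a != b -> \prod_(w in [set a; b]) x w = x a * x b.
Proof. by move=> ab; rewrite big_setU1 ?big_set1 // inE. Qed.
End Gen3.

Section Main.
Variable C : numClosedFieldType.
Definition aa (u : 'I_4) : C := 3.-root (zz C u).
Definition yy (S : {set 'I_4}) : C := sgn C S * (\prod_(c in S) aa c) / mu C.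
Definition xx (w : W) : C :=
  match w with inl u => aa u ^+ 2 | inr q => yy (sval q).1 end.

Lemma lam_neq0 : lam C != 0.
Proof.
apply/eqP => h; have := lam3 C; rewrite h expr0n /= => /eqP.
by rewrite eq_sym pnatr_eq0.
Qed.
Lemma mu_neq0 : mu C != 0.
Proof. by apply: contraNneq lam_neq0 => h; rewrite -(sqrtCK (lam C)) -/(mu C) h expr0n. Qed.
Lemma sgn2 S : sgn C S ^+ 2 = 1.
Proof. by rewrite /sgn; case: ifP => _; rewrite ?sqrrN expr1n. Qed.
Lemma aa3 u : aa u ^+ 3 = zz C u.
Proof. exact: rootCK. Qed.

Lemma if_imset (S : {set W}) (G : C) :
  (if S \in power_edges K4 3 then G else 0) =
  \sum_(e in gedges K4) (if S == pedge K4 3 e then G else 0).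
Proof.
case: ifP => [/imsetP [e0 He0 ->] | hS].
  rewrite (bigD1 e0) //= eqxx big1 ?addr0 // => e /andP [_ ne].
  by rewrite (inj_eq pedge_inj) eq_sym (negbTE ne).
symmetry; apply: big1 => e He; case: eqP => // E; rewrite E in hS.
by rewrite imset_f in hS.
Qed.

Lemma step1 (i : W) :
  \sum_(f : {ffun 'I_3.-1 -> W}) @adjT C W (power_edges K4 3) 3 i f * \prod_(j < 3.-1) xx (f j)
  = 2^-1 * \sum_(e in gedges K4) \sum_w1 \sum_w2
       (if [set i; w1; w2] == pedge K4 3 e then xx w1 * xx w2 else 0).
Proof.
rewrite (@sum_ffun2 C W).
transitivity (\sum_w1 \sum_w2 2^-1 *
   (if [set i; w1; w2] \in power_edges K4 3 then xx w1 * xx w2 else 0)).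
  apply: eq_bigr => w1 _; apply: eq_bigr => w2 _.
  rewrite /adjT mk2_img prod_mk2 setUA.
  by case: ifP => _; rewrite ?mul0r ?mulr0.
transitivity (2^-1 * \sum_w1 \sum_w2 \sum_(e in gedges K4)
       (if [set i; w1; w2] == pedge K4 3 e then xx w1 * xx w2 else 0)).
  rewrite mulr_sumr; apply: eq_bigr => w1 _; rewrite mulr_sumr.
  by apply: eq_bigr => w2 _; rewrite if_imset.
congr (_ * _); under eq_bigr => w1 _ do rewrite exchange_big.
by rewrite exchange_big.
Qed.

Lemma case_inr (q : Wq) :
  2^-1 * \sum_(e in gedges K4) \sum_w1 \sum_w2
       (if [set (inr q : W); w1; w2] == pedge K4 3 e then xx w1 * xx w2 else 0)
  = lam C * xx (inr q) ^+ 2.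
Proof.
have HS : (sval q).1 \in gedges K4 := svalP q.
rewrite (bigD1 (sval q).1) //= [X in _ + X]big1 ?addr0; last first.
  move=> e /andP [_ ne]; apply: inner0.
  by rewrite pedge_inr eq_sym (negbTE ne).
have Eq : q = qof HS := @qofP _ HS q erefl.
case/gedgesP: (HS) => a [b [ab ES]].
rewrite (@pedgeE _ HS a b ES) -Eq.
rewrite inner3; last first.
- by rewrite !inE eqxx orbT.
- by apply: card3; rewrite ?eq_inl ?eq_inlr.
rewrite setD3r ?eq_inlr // prod_set2 ?eq_inl //= /yy ES prod_set2 //.
rewrite -(sqrtCK (lam C)) -/(mu C) -mulrA exprMn sgn2 mul1r.
by field; exact: mu_neq0.
Qed.

Lemma case_inl (u : 'I_4) :
  2^-1 * \sum_(e in gedges K4) \sum_w1 \sum_w2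
       (if [set (inl u : W); w1; w2] == pedge K4 3 e then xx w1 * xx w2 else 0)
  = lam C * xx (inl u) ^+ 2.
Proof.
rewrite (bigID (fun e : {set 'I_4} => u \in e)) /= [X in _ + X]big1 ?addr0; last first.
  by move=> e /andP [_ nu]; apply: inner0; rewrite pedge_inl.
have injh : {in [set v | v != u] &, injective (fun v => [set u; v])}.
  move=> v1 v2; rewrite !inE => n1 n2 E.
  have : v1 \in [set u; v2] by rewrite -E !inE eqxx orbT.
  by rewrite !inE (negbTE n1) /= => /eqP.
rewrite (eq_bigl (fun e => e \in [set [set u; v] | v in [set v | v != u]])); last first.
  move=> e; apply/andP/imsetP => [[/gedgesP [a [b [ab ->]]] hu]|[v hv ->]].
    move: hu; rewrite !inE => /orP [/eqP ->|/eqP ->].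
      by exists b => //; rewrite inE eq_sym.
    by exists a; [rewrite inE | apply/setP => w; rewrite !inE orbC].
  split; last by rewrite !inE eqxx.
  by apply/gedgesP; exists u, v; split=> //; move: hv; rewrite inE eq_sym.
rewrite big_imset //=.
transitivity (2^-1 * \sum_(v in [set v | v != u]) 2 * (aa v ^+ 2 * yy [set u; v])).
  congr (_ * _); apply: eq_bigr => v; rewrite inE => hv.
  have He : [set u; v] \in gedges K4 by apply/gedgesP; exists u, v; rewrite eq_sym.
  rewrite (@pedgeE _ He u v erefl) inner3; last first.
  - by rewrite !inE eqxx.
  - by apply: card3; rewrite ?eq_inl ?eq_inlr // eq_sym.
  by rewrite setD3l ?eq_inl ?eq_inlr 1?eq_sym // prod_set2 ?eq_inlr.
transitivity (2^-1 * (2 * (aa u / mu C)) * \sum_(v in [set v | v != u]) sgn C [set u; v] * zz C v).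
  rewrite -[RHS]mulrA [in RHS]mulr_sumr; congr (_ * _); apply: eq_bigr => v; rewrite inE => hv.
  rewrite /yy prod_set2 1?eq_sym // -aa3.
  by field; exact: mu_neq0.
rewrite signed_eig -aa3 /beta /= -(sqrtCK (lam C)) -/(mu C).
by field; exact: mu_neq0.
Qed.
End Main.


Lemma part2 (C : numClosedFieldType) :
  ~ (exists (S : {set 'I_4}) (b : C),
        b ^+ 2 = 5%:R /\ eigenvalue (induced_adj K4 C S) b).
Proof.
case=> S [b [hb /eigenvalueP [v hv v0]]].
set m := #|S| in v hv v0.
have b1 : b + 1 != 0.
  apply/eqP=> /eqP; rewrite addr_eq0 => /eqP hb1.
  by move: hb; rewrite hb1 sqrrN expr1n => /eqP; rewrite eq_sym pnatr_eq1.
set s := \sum_i v 0 i.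
have hj : forall j, (b + 1) * v 0 j = s.
  move=> j; have := congr1 (fun M : 'M[C]_(1, m) => M 0 j) hv; rewrite !mxE /= => e.
  rewrite mulrDl mul1r -e /s (bigD1 j) //= mxE /= /K4 eqxx mulr0 add0r.
  rewrite [in RHS](bigD1 j) //= addrC; congr (_ + _); apply: eq_bigr => i ij.
  by rewrite mxE /K4 (inj_eq (@enum_val_inj _ _)) ij mulr1.
have s0 : s != 0.
  apply: contraNneq v0 => s0; apply/eqP/rowP => j; rewrite mxE.
  by move/eqP: (hj j); rewrite s0 mulf_eq0 (negbTE b1) /= => /eqP.
have hm : b + 1 = m%:R.
  have : \sum_j (b + 1) * v 0 j = \sum_(j < m) s by apply: eq_bigr => j _; exact: hj.
  rewrite -mulr_sumr sumr_const card_ord -/s => e.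
  by apply: (mulIf s0); rewrite e mulr_natl.
have m1 : (0 < m)%N.
  by rewrite lt0n; apply: contraNneq b1 => m0; rewrite hm m0.
have mle : (m <= 4)%N by have := max_card S; rewrite card_ord.
have hb' : b = (m - 1)%:R by rewrite natrB // -hm addrK.
move: hb; rewrite hb' -natrX => /eqP; rewrite eqr_nat.
by move: m1 mle; case: m hb' {v hv v0 s hj s0 hm} => [|[|[|[|[|]]]]].
Qed.

Theorem mainTheorem3 (C : numClosedFieldType) :
  hyp_eigenvalue (power_edges K4 3) 3 (3.-root (5%:R : C)) /\
  ~ (exists (S : {set 'I_4}) (b : C),
        b ^+ 2 = 5%:R /\ eigenvalue (induced_adj K4 C S) b).
Proof.
split; last exact: part2.
exists (@xx C); split.
  by exists (inl ord0); rewrite /= expf_neq0 // rootC_eq0 // pnatr_eq0.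
move=> i; rewrite (@step1 C i).
by case: i => [u|q]; [exact: case_inl | exact: case_inr].
Qed.
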